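(* Let $k\ge1$ and suppose $\delta\notin\bigcup_{j=1}^kI_j$, where $I_j=\{-\frac{p}{2(n+1)}:p\in\{j-1,\dots,2j-2\}\}$. Then \[R^k=\bigoplus_{l=0}^k s^l\big(R^{k-l}\cap\ker i(\alpha)\big),\] where $s^l:R^{k-l}\to R^k$ denotes the composite $s_{k-1}\circ s_{k-2}\circ\cdots\circ s_{k-l}$ ($s^0=\mathrm{Id}$), and for $j\ge1$, $s_{j-1}:R^{j-1}\to R^j$ is $s_{j-1}(S)=-\sum_{l=1}^jb_{j,l}X^l(i(\alpha)^{l-1}(S))$ with $b_{j,l}=\big(\prod_{m=1}^l(-r(m,j-m))\big)^{-1}$.
   Context: Let $n\ge1$, $M=\mathbb{R}^{2n+1}$ with coordinates $(q^1,\dots,q^n,p^1,\dots,p^n,t)$. For $\mu\in\mathbb{R}$, $\mathcal{S}^k_\mu$ denotes the space of smooth functions $S(x,\xi)$ on $M\times\mathbb{R}^{2n+1}$ homogeneous polynomial of degree $k$ in $\xi=(\xi_{q^1},\dots,\xi_{q^n},\xi_{p^1},\dots,\xi_{p^n},\xi_t)$. Fix $\delta\in\mathbb{R}$ and set $R^k=\mathcal{S}^k_{\delta+\frac{k}{n+1}}$ for $k\ge0$, $R^{j}=0$ for $j<0$. Let $E_s=\sum_i(p^i\partial_{p^i}+q^i\partial_{q^i})$, $\langle E_s,\xi\rangle=\sum_i(p^i\xi_{p^i}+q^i\xi_{q^i})$, $D(S)=\sum_i(\xi_{q^i}\partial_{p^i}S-\xi_{p^i}\partial_{q^i}S)+\xi_tE_s(S)-\langle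 E_s,\xi\rangle\partial_tS$. Operators: $i(\alpha):R^k\to R^{k-1}$, $i(\alpha)(S)=\frac12\big(\sum_i(p^i\partial_{\xi_{q^i}}S-q^i\partial_{\xi_{p^i}}S)-\partial_{\xi_t}S\big)$; $X:R^k\to R^{k+1}$, $X(S)=D(S)+(2(n+1)\delta+k)\xi_tS$. Set $r(l,k)=-\frac{l}{2}\big(2(n+1)\delta+2k+l-1\big)$. *)

(* Defs.v *)
From HB Require Import structures.
From mathcomp Require Import all_boot all_order all_algebra.
From mathcomp Require Import all_classical all_reals all_analysis.
Set Implicit Arguments. Unset Strict Implicit. Unset Printing Implicit Defensive.
Import Order.TTheory GRing.Theory Num.Theory.
Import numFieldNormedType.Exports.
Local Open Scope ring_scope.

Section Symbols.
Variables (R : realType) (n : nat) (delta : R).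

(* dimension of M = R^{2n+1}; coordinates (q^1..q^n, p^1..p^n, t) *)
Definition dimM := (2 * n).+1.
Definition pt := 'rV[R]_dimM.
(* a symbol S(x, xi), x in M, xi in R^{2n+1} (the fibre coordinates) *)
Definition sym := pt -> pt -> R.

Definition qi (i : 'I_n) : 'I_dimM := inord i.
Definition pi_ (i : 'I_n) : 'I_dimM := inord (n + i).
Definition ti : 'I_dimM := inord (2 * n).

Definition ev (j : 'I_dimM) : pt := delta_mx 0 j.

Definition dx (j : 'I_dimM) (S : sym) : sym :=
  fun x xi => derive (fun y => S y xi) x (ev j).
Definition dxi (j : 'I_dimM) (S : sym) : sym :=
  fun x xi => derive (fun z => S x z) xi (ev j).

Definition pder (l : seq 'I_dimM) (f : pt -> R) : pt -> R :=
  foldr (fun j g => fun y => derive g y (ev j)) f l.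

Definition smooth (f : pt -> R) : Prop :=
  forall (l : seq 'I_dimM) (x : pt), differentiable (pder l f) x.

(* This is the space S^k_mu (for any weight mu), hence R^k for k >= 0. *)
Definition inR (k : nat) (S : sym) : Prop :=
  exists c : {ffun 'I_dimM -> 'I_k.+1} -> pt -> R,
    (forall a, smooth (c a)) /\
    forall x xi, S x xi =
      \sum_(a : {ffun 'I_dimM -> 'I_k.+1} | (\sum_i (a i : nat) == k)%N)
         c a x * \prod_i xi 0 i ^+ a i.

Definition Es (S : sym) : sym := fun x xi =>
  \sum_(i < n) (x 0 (pi_ i) * dx (pi_ i) S x xi + x 0 (qi i) * dx (qi i) S x xi).
Definition Esxi (x xi : pt) : R :=
  \sum_(i < n) (x 0 (pi_ i) * xi 0 (pi_ i) + x 0 (qi i) * xi 0 (qi i)).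

Definition Dop (S : sym) : sym := fun x xi =>
  \sum_(i < n) (xi 0 (qi i) * dx (pi_ i) S x xi - xi 0 (pi_ i) * dx (qi i) S x xi)
  + xi 0 ti * Es S x xi - Esxi x xi * dx ti S x xi.

Definition ialpha (S : sym) : sym := fun x xi =>
  2^-1 * (\sum_(i < n) (x 0 (pi_ i) * dxi (qi i) S x xi
                        - x 0 (qi i) * dxi (pi_ i) S x xi)
          - dxi ti S x xi).

(* X : R^m -> R^{m+1} *)
Definition Xop (m : nat) (S : sym) : sym := fun x xi =>
  Dop S x xi + (2 * (n.+1)%:R * delta + m%:R) * xi 0 ti * S x xi.

(* X^l on R^m : X_{m+l-1} o ... o X_m *)
Fixpoint Xit (m l : nat) (S : sym) : sym :=
  match l with
  | 0 => S
  | l'.+1 => Xop (m + l') (Xit m l' S)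
  end.

Definition r (l k : nat) : R :=
  - (l%:R / 2) * (2 * (n.+1)%:R * delta + 2 * k%:R + l%:R - 1).

Definition b (j l : nat) : R :=
  (\prod_(1 <= m < l.+1) (- r m (j - m)))^-1.

(* sop j = s_{j-1} : R^{j-1} -> R^j *)
Definition sop (j : nat) (S : sym) : sym := fun x xi =>
  - \sum_(1 <= l < j.+1) b j l * Xit (j - l) l (iter l.-1 ialpha S) x xi.

(* scomp m l = s_{m+l-1} o ... o s_m : R^m -> R^{m+l};
   the paper's s^l : R^{k-l} -> R^k is scomp (k-l) l *)
Fixpoint scomp (m l : nat) (S : sym) : sym :=
  match l with
  | 0 => S
  | l'.+1 => sop (m + l').+1 (scomp m l' S)
  end.

End Symbols.

(* Main.v *)
Require Import Defs.
From HB Require Import structures.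
From mathcomp Require Import all_boot all_order all_algebra.
From mathcomp Require Import all_classical all_reals all_analysis.
From mathcomp Require Import ring zify.
From Stdlib Require Import Lia.
Import Order.TTheory GRing.Theory Num.Theory.
Import numFieldNormedType.Exports.
Local Open Scope ring_scope.
Set Implicit Arguments. Unset Strict Implicit.

Section P1.
Variables (R : realType) (n : nat).
Local Notation pt := (pt R n).
Local Notation sym := (sym R n).
Local Notation I := ('I_(dimM n)).
Local Notation ev := (@ev R n).

Lemma coord_lin (i : I) : linear (fun z : pt => z 0 i).
Proof. by move=> a u w; rewrite !mxE. Qed.

Lemma is_derive_coord (i : I) (a v : pt) :
  is_derive a v (fun z : pt => z 0 i) (v 0 i).
Proof.
pose f : {linear pt -> R^o} := HB.pack (fun z : pt => z 0 i : R^o)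
   (GRing.isLinear.Build _ _ _ _ _ (@coord_lin i)).
have df : differentiable (f : pt -> R^o) a by exact: differentiable_coord.
apply: DeriveDef; first exact: diff_derivable.
rewrite deriveE //.
have -> : (fun z : pt => z 0 i) = (f : pt -> R^o) by [].
rewrite diff_lin //.
exact: coord_continuous.
Qed.

Lemma derivable_coord (i : I) (a v : pt) : derivable (fun z : pt => z 0 i) a v.
Proof. exact: (@ex_derive _ _ _ _ _ _ _ (is_derive_coord i a v)). Qed.
Lemma derive_coord (i : I) (a v : pt) : derive (fun z : pt => z 0 i) a v = v 0 i.
Proof. exact: (@derive_val _ _ _ _ _ _ _ (is_derive_coord i a v)). Qed.

Lemma evE (j i : I) : ev j 0 i = (i == j)%:R.
Proof. by rewrite /Defs.ev mxE eqxx. Qed.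

Lemma pdD (f g : pt -> R) x v : derivable f x v -> derivable g x v ->
  derive (fun y => f y + g y) x v = derive f x v + derive g x v.
Proof. exact: deriveD. Qed.
Lemma pvD (f g : pt -> R) x v : derivable f x v -> derivable g x v ->
  derivable (fun y => f y + g y) x v.
Proof. exact: derivableD. Qed.
Lemma pdB (f g : pt -> R) x v : derivable f x v -> derivable g x v ->
  derive (fun y => f y - g y) x v = derive f x v - derive g x v.
Proof. exact: deriveB. Qed.
Lemma pvB (f g : pt -> R) x v : derivable f x v -> derivable g x v ->
  derivable (fun y => f y - g y) x v.
Proof. exact: derivableB. Qed.
Lemma pdM (f g : pt -> R) x v : derivable f x v -> derivable g x v ->
  derive (fun y => f y * g y) x v = f x * derive g x v + g x * derive f x v.
Proof. exact: deriveM. Qed.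
Lemma pvM (f g : pt -> R) x v : derivable f x v -> derivable g x v ->
  derivable (fun y => f y * g y) x v.
Proof. exact: derivableM. Qed.
Lemma pdZ (f : pt -> R) (c : R) x v : derivable f x v ->
  derive (fun y => c * f y) x v = c * derive f x v.
Proof. exact: deriveMl. Qed.
Lemma pvZ (f : pt -> R) (c : R) x v : derivable f x v ->
  derivable (fun y => c * f y) x v.
Proof. move=> h; apply: (@pvM (fun=> c)) => //; exact: derivable_cst. Qed.
Lemma pdC (c : R) x v : derive (fun _ : pt => c) x v = 0.
Proof. exact: derive_cst. Qed.
Lemma pvC (c : R) x v : derivable (fun _ : pt => c) x v.
Proof. exact: derivable_cst. Qed.
Lemma pdX (f : pt -> R) m x v : derivable f x v ->
  derive (fun y => f y ^+ m) x v = m%:R * f x ^+ m.-1 * derive f x v.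
Proof.
move=> h; have -> : (fun y => f y ^+ m) = f ^+ m by apply: funext => y; rewrite exprfctE.
by rewrite deriveX.
Qed.
Lemma pvX (f : pt -> R) m x v : derivable f x v ->
  derivable (fun y => f y ^+ m) x v.
Proof.
move=> h; have -> : (fun y => f y ^+ m) = f ^+ m by apply: funext => y; rewrite exprfctE.
exact: derivableX.
Qed.

Lemma der_big (T : Type) (s : seq T) (P : pred T) (F : T -> pt -> R) x v :
  (forall t, P t -> derivable (F t) x v) ->
  derivable (fun y => \sum_(t <- s | P t) F t y) x v /\
  derive (fun y => \sum_(t <- s | P t) F t y) x v =
    \sum_(t <- s | P t) derive (F t) x v.
Proof.
move=> hF; elim: s => [|t s [IH1 IH2]].
  have -> : (fun y => \sum_(t <- [::] | P t) F t y) = fun=> 0.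
    by apply: funext => y; rewrite big_nil.
  by rewrite big_nil; split; [exact: pvC | exact: pdC].
case Pt: (P t).
  have -> : (fun y => \sum_(t0 <- t :: s | P t0) F t0 y) =
     fun y => F t y + \sum_(t0 <- s | P t0) F t0 y.
    by apply: funext => y; rewrite big_cons Pt.
  rewrite big_cons Pt; split; first exact: pvD (hF _ Pt) IH1.
  by rewrite pdD ?IH2 //; exact: hF.
have -> : (fun y => \sum_(t0 <- t :: s | P t0) F t0 y) =
   fun y => \sum_(t0 <- s | P t0) F t0 y.
  by apply: funext => y; rewrite big_cons Pt.
by rewrite big_cons Pt.
Qed.

Definition smooth_le (m : nat) (f : pt -> R) :=
  forall l : seq I, (size l <= m)%N -> forall x, differentiable (pder l f) x.

Lemma pder_rcons j l (f : pt -> R) :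
  pder (rcons l j) f = pder l (fun y => derive f y (ev j)).
Proof. by rewrite /pder foldr_rcons. Qed.

Lemma smooth_diff (f : pt -> R) : smooth f -> forall x, differentiable f x.
Proof. by move=> h x; exact: (h [::] x). Qed.
Lemma smooth_der (f : pt -> R) v x : smooth f -> derivable f x v.
Proof. by move=> h; apply: diff_derivable; exact: smooth_diff. Qed.

Lemma smooth_derive (f : pt -> R) j : smooth f -> smooth (fun y => derive f y (ev j)).
Proof. by move=> h l x; rewrite -pder_rcons; exact: h. Qed.

Lemma pder_add_le m (f g : pt -> R) : smooth_le m f -> smooth_le m g ->
  forall l : seq I, (size l <= m.+1)%N ->
  pder l (fun y => f y + g y) = fun y => pder l f y + pder l g y.
Proof.
move=> hf hg; elim=> [//|j l IH] /= hs.
rewrite IH; last by apply: leqW.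
apply: funext => y; rewrite pdD //; apply: diff_derivable.
  exact: hf. exact: hg.
Qed.

Lemma smooth_le_add m (f g : pt -> R) : smooth_le m f -> smooth_le m g ->
  smooth_le m (fun y => f y + g y).
Proof.
move=> hf hg l hl x; rewrite (pder_add_le hf hg) ?(leqW hl) //.
apply: differentiableD; [exact: hf | exact: hg].
Qed.

Lemma smoothP (f : pt -> R) : smooth f <-> forall m, smooth_le m f.
Proof. split; [by move=> h m l _ | by move=> h l; exact: (h (size l))]. Qed.

Lemma smooth_add (f g : pt -> R) : smooth f -> smooth g -> smooth (fun y => f y + g y).
Proof.
move=> /smoothP hf /smoothP hg; apply/smoothP => m; exact: smooth_le_add.
Qed.

Lemma pder_scale c (f : pt -> R) : smooth f -> forall l : seq I,
  pder l (fun y => c * f y) = fun y => c * pder l f y.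
Proof.
move=> hf; elim=> [//|j l IH] /=; rewrite IH; apply: funext => y.
by rewrite pdZ //; apply: diff_derivable; exact: hf.
Qed.

Lemma smooth_scale c (f : pt -> R) : smooth f -> smooth (fun y => c * f y).
Proof.
move=> hf l x; rewrite pder_scale //.
have -> : (fun y => c * pder l f y) = (fun=> c) * pder l f by [].
by apply: differentiableM; [exact: differentiable_cst | exact: hf].
Qed.

Lemma pder_cst (c : R) (l : seq I) :
  pder l (fun _ : pt => c) = fun _ => if l is [::] then c else 0.
Proof.
elim: l => [//|j l IH] /=; rewrite IH; apply: funext => y; exact: pdC.
Qed.

Lemma smooth_cst (c : R) : smooth (fun _ : pt => c).
Proof. by move=> l x; rewrite pder_cst; exact: differentiable_cst. Qed.

Lemma smooth_coord (i : I) : smooth (fun z : pt => z 0 i).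
Proof.
move=> l x; case/lastP: l => [|l j]; first exact: differentiable_coord.
rewrite pder_rcons.
have -> : (fun y : pt => derive (fun z : pt => z 0 i) y (ev j)) = fun _ => ev j 0 i.
  by apply: funext => y; rewrite derive_coord.
exact: smooth_cst.
Qed.

Lemma smooth_le_mul m : forall f g : pt -> R, smooth f -> smooth g ->
  smooth_le m (fun y => f y * g y).
Proof.
elim: m => [|m IH] f g hf hg l hl x.
  case: l hl => // _ /=.
  have -> : (fun y => f y * g y) = f * g by [].
  apply: differentiableM; exact: smooth_diff.
case/lastP: l hl => [|l j] hl.
  have -> : pder [::] (fun y => f y * g y) = f * g by [].
  apply: differentiableM; exact: smooth_diff.
rewrite size_rcons ltnS in hl.
rewrite pder_rcons.
have -> : (fun y => derive (fun y0 => f y0 * g y0) y (ev j)) =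
  fun y => f y * derive g y (ev j) + g y * derive f y (ev j).
  by apply: funext => y; rewrite pdM //; exact: smooth_der.
have h1 := IH f _ hf (smooth_derive j hg).
have h2 := IH g _ hg (smooth_derive j hf).
rewrite (pder_add_le h1 h2) ?(leqW hl) //.
apply: differentiableD; [exact: h1 | exact: h2].
Qed.

Lemma smooth_mul (f g : pt -> R) : smooth f -> smooth g -> smooth (fun y => f y * g y).
Proof. move=> hf hg; apply/smoothP => m; exact: smooth_le_mul. Qed.

End P1.


Section P2.
Variables (R : realType) (n : nat).
Local Notation pt := (pt R n).
Local Notation sym := (sym R n).
Local Notation I := ('I_(dimM n)).
Local Notation ev := (@ev R n).
Local Notation inR := (@inR R n).

Definition mono (e : I -> nat) (z : pt) : R := \prod_(i : I) z 0 i ^+ e i.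

Lemma der_prod (T : Type) (s : seq T) (P : pred T) (F : T -> pt -> R) x v :
  (forall t, P t -> derivable (F t) x v) ->
  derivable (fun y => \prod_(t <- s | P t) F t y) x v.
Proof.
move=> hF; elim: s => [|t s IH].
  have -> : (fun y => \prod_(t <- [::] | P t) F t y) = fun=> 1.
    by apply: funext => y; rewrite big_nil.
  exact: pvC.
case Pt: (P t).
  have -> : (fun y => \prod_(t0 <- t :: s | P t0) F t0 y) =
     fun y => F t y * \prod_(t0 <- s | P t0) F t0 y.
    by apply: funext => y; rewrite big_cons Pt.
  exact: pvM (hF _ Pt) IH.
have -> : (fun y => \prod_(t0 <- t :: s | P t0) F t0 y) =
   fun y => \prod_(t0 <- s | P t0) F t0 y.
  by apply: funext => y; rewrite big_cons Pt.
exact: IH.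
Qed.

Lemma der_prod0 (T : Type) (s : seq T) (P : pred T) (F : T -> pt -> R) x v :
  (forall t, P t -> derivable (F t) x v) ->
  (forall t, P t -> derive (F t) x v = 0) ->
  derive (fun y => \prod_(t <- s | P t) F t y) x v = 0.
Proof.
move=> hF h0; elim: s => [|t s IH].
  have -> : (fun y => \prod_(t <- [::] | P t) F t y) = fun=> 1.
    by apply: funext => y; rewrite big_nil.
  exact: pdC.
case Pt: (P t).
  have -> : (fun y => \prod_(t0 <- t :: s | P t0) F t0 y) =
     fun y => F t y * \prod_(t0 <- s | P t0) F t0 y.
    by apply: funext => y; rewrite big_cons Pt.
  rewrite pdM ?IH ?h0 ?mulr0 ?mul0r ?addr0 //; first exact: hF.
  exact: der_prod.
have -> : (fun y => \prod_(t0 <- t :: s | P t0) F t0 y) =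
   fun y => \prod_(t0 <- s | P t0) F t0 y.
  by apply: funext => y; rewrite big_cons Pt.
exact: IH.
Qed.

Lemma derivable_mono e x v : derivable (mono e) x v.
Proof.
apply: (@der_prod _ _ _ (fun i y => y 0 i ^+ e i)) => t _.
apply: pvX; exact: derivable_coord.
Qed.

Lemma derive_mono e x j :
  derive (mono e) x (ev j) = (e j)%:R * mono (fun i => e i - (i == j))%N x.
Proof.
have -> : mono e = fun y => y 0 j ^+ e j * \prod_(i | i != j) y 0 i ^+ e i.
  by apply: funext => y; rewrite /mono (bigD1 j).
rewrite pdM; last 2 first.
- apply: pvX; exact: derivable_coord.
- apply: der_prod => t _; apply: pvX; exact: derivable_coord.
rewrite der_prod0; last 2 first.
- move=> t _; apply: pvX; exact: derivable_coord.
- move=> t tj; rewrite pdX ?derive_coord ?evE ?(negbTE tj) ?mulr0 //.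
  exact: derivable_coord.
rewrite pdX ?derive_coord ?evE ?eqxx; last exact: derivable_coord.
rewrite mulr0 add0r mulr1 /mono [in RHS](bigD1 j) //= eqxx subn1.
rewrite mulrC -mulrA; congr (_ * (_ * _)).
apply: eq_bigr => i ij; by rewrite (negbTE ij) subn0.
Qed.

Definition fam (T : Type) (s : seq T) (P : pred T) (c : T -> pt -> R)
  (e : T -> I -> nat) : sym := fun x xi => \sum_(t <- s | P t) c t x * mono (e t) xi.
Arguments fam : clear implicits.

Lemma fam_derx (T : Type) (s : seq T) (P : pred T) (c : T -> pt -> R) (e : T -> I -> nat) (xi x v : pt) :
  (forall t, P t -> derivable (c t) x v) ->
  derivable (fun y => fam T s P c e y xi) x v /\
  derive (fun y => fam T s P c e y xi) x v =
    \sum_(t <- s | P t) derive (c t) x v * mono (e t) xi.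
Proof.
move=> hc; have [h1 h2] := @der_big R n _ s P (fun t y => c t y * mono (e t) xi) x v
  (fun t Pt => ltac:(apply: pvM; [exact: hc | exact: pvC])).
split; first exact: h1.
rewrite /fam h2; apply: eq_bigr => t Pt; rewrite pdM ?pdC.
- by rewrite mulr0 add0r mulrC.
- exact: hc.
- exact: pvC.
Qed.

Lemma fam_derxi (T : Type) (s : seq T) (P : pred T) (c : T -> pt -> R) (e : T -> I -> nat) (x xi v : pt) :
  derivable (fun z => fam T s P c e x z) xi v /\
  derive (fun z => fam T s P c e x z) xi v =
    \sum_(t <- s | P t) c t x * derive (mono (e t)) xi v.
Proof.
have [h1 h2] := @der_big R n _ s P (fun t z => c t x * mono (e t) z) xi v
  (fun t Pt => ltac:(apply: pvZ; exact: derivable_mono)).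
split; first exact: h1.
rewrite /fam h2; apply: eq_bigr => t Pt; rewrite pdZ //; exact: derivable_mono.
Qed.

Lemma fam_dx (T : Type) (s : seq T) (P : pred T) (c : T -> pt -> R) (e : T -> I -> nat) j :
  (forall t, P t -> smooth (c t)) ->
  dx j (fam T s P c e) = fam T s P (fun t y => derive (c t) y (ev j)) e.
Proof.
move=> hc; apply: funext => x; apply: funext => xi.
rewrite /dx (@fam_derx T s P c e xi x (ev j) (fun t Pt => ltac:(apply: smooth_der; exact: hc))).2 //.
Qed.

Lemma fam_dxi (T : Type) (s : seq T) (P : pred T) (c : T -> pt -> R) (e : T -> I -> nat) j :
  dxi j (fam T s P c e) =
  fam T s P (fun t y => (e t j)%:R * c t y) (fun t i => e t i - (i == j))%N.
Proof.
apply: funext => x; apply: funext => xi.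
rewrite /dxi (@fam_derxi T s P c e x xi (ev j)).2; apply: eq_bigr => t _.
by rewrite derive_mono mulrA [c t x * _]mulrC.
Qed.

Lemma inR_ext k (S T : sym) : (forall x xi, S x xi = T x xi) -> inR k T -> inR k S.
Proof. move=> h [c [hc hT]]; exists c; split => // x xi; by rewrite h hT. Qed.

Lemma inR_eq k (S T : sym) : S = T -> inR k T -> inR k S.
Proof. by move=> ->. Qed.

Lemma inR0 k : inR k (fun _ _ => 0).
Proof.
exists (fun _ _ => 0); split; first by move=> a; exact: smooth_cst.
by move=> x xi; rewrite big1 // => a _; rewrite mul0r.
Qed.

Lemma inR_add k (S T : sym) : inR k S -> inR k T -> inR k (fun x xi => S x xi + T x xi).
Proof.
move=> [c [hc hS]] [d [hd hT]]; exists (fun a y => c a y + d a y); split.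
  by move=> a; apply: smooth_add.
move=> x xi; rewrite hS hT -big_split /=; apply: eq_bigr => a _; by rewrite mulrDl.
Qed.

Lemma inR_mulx k (f : pt -> R) (S : sym) : smooth f -> inR k S ->
  inR k (fun x xi => f x * S x xi).
Proof.
move=> hf [c [hc hS]]; exists (fun a y => f y * c a y); split.
  by move=> a; apply: smooth_mul.
move=> x xi; rewrite hS big_distrr /=; apply: eq_bigr => a _; by rewrite mulrA.
Qed.

Lemma inR_scale k (u : R) (S : sym) : inR k S -> inR k (fun x xi => u * S x xi).
Proof. by move=> h; apply: (@inR_mulx k (fun=> u)) => //; exact: smooth_cst. Qed.

Lemma inR_opp k (S : sym) : inR k S -> inR k (fun x xi => - S x xi).
Proof.
move=> h; apply: inR_ext (inR_scale (-1) h) => x xi; by rewrite mulN1r.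
Qed.

Lemma inR_sub k (S T : sym) : inR k S -> inR k T -> inR k (fun x xi => S x xi - T x xi).
Proof. move=> hS hT; exact: inR_add hS (inR_opp hT). Qed.

Lemma inR_big k (T : Type) (s : seq T) (P : pred T) (F : T -> sym) :
  (forall t, P t -> inR k (F t)) -> inR k (fun x xi => \sum_(t <- s | P t) F t x xi).
Proof.
move=> hF; elim: s => [|t s IH].
  by apply: inR_ext (inR0 k) => x xi; rewrite big_nil.
case Pt: (P t).
  apply: inR_ext (inR_add (hF t Pt) IH) => x xi; by rewrite big_cons Pt.
by apply: inR_ext IH => x xi; rewrite big_cons Pt.
Qed.

Lemma inR_mono k (c : pt -> R) (e : I -> nat) : smooth c ->
  ((\sum_i e i)%N = k \/ forall y, c y = 0) ->
  inR k (fun x xi => c x * mono e xi).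
Proof.
move=> hc [he|h0]; last first.
  by apply: inR_ext (inR0 k) => x xi; rewrite h0 mul0r.
have ek : forall i, (e i < k.+1)%N.
  move=> i; rewrite ltnS -he (bigD1 i) //=; exact: leq_addr.
pose fe : {ffun I -> 'I_k.+1} := [ffun i => Ordinal (ek i)].
exists (fun a => if a == fe then c else fun=> 0); split.
  by move=> a; case: ifP => _ //; exact: smooth_cst.
move=> x xi; rewrite (bigD1 fe) /=; last first.
  apply/eqP; rewrite (eq_bigr (fun i => e i)) ?he // => i _; by rewrite ffunE.
rewrite eqxx [X in _ + X]big1 ?addr0; last by move=> a /ssrbool.andP [_ /negbTE ->]; rewrite mul0r.
congr (_ * _); rewrite /mono; apply: eq_bigr => i _; by rewrite ffunE.
Qed.

Lemma inR_fam_intro k (T : Type) (s : seq T) (P : pred T) (c : T -> pt -> R) (e : T -> I -> nat) :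
  (forall t, P t -> smooth (c t)) ->
  (forall t, P t -> (\sum_i e t i)%N = k \/ forall y, c t y = 0) ->
  inR k (fam T s P c e).
Proof.
move=> hc he; apply: inR_ext (@inR_big k _ s P (fun t x xi => c t x * mono (e t) xi) _).
  by [].
move=> t Pt; apply: inR_mono; [exact: hc | exact: he].
Qed.

Definition kfam k (c : {ffun I -> 'I_k.+1} -> pt -> R) : sym :=
  fam _ (index_enum {ffun I -> 'I_k.+1}) (fun a => (\sum_i (a i : nat) == k)%N) c
      (fun a i => a i).

Lemma inR_kfam k S : inR k S ->
  exists c : {ffun I -> 'I_k.+1} -> pt -> R, (forall a, smooth (c a)) /\ S = kfam c.
Proof.
move=> [c [hc hS]]; exists c; split => //.
apply: funext => x; apply: funext => xi; rewrite hS //.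
Qed.

Lemma inR_derx k (S : sym) xi x v : inR k S -> derivable (fun y => S y xi) x v.
Proof.
move=> /inR_kfam [c [hc ->]]; apply: (@fam_derx _ _ _ _ _ xi x v _).1 => t _.
exact: smooth_der.
Qed.

Lemma inR_derxi k (S : sym) x xi v : inR k S -> derivable (fun z => S x z) xi v.
Proof. move=> /inR_kfam [c [hc ->]]; exact: (@fam_derxi _ _ _ _ _ x xi v).1. Qed.

Lemma inR_dx k (S : sym) j : inR k S -> inR k (dx j S).
Proof.
move=> /inR_kfam [c [hc ->]]; rewrite fam_dx //; apply: inR_fam_intro.
  move=> t _; exact: smooth_derive.
by move=> t /eqP ->; left.
Qed.

Lemma inR_dxi k (S : sym) j : inR k S -> inR k.-1 (dxi j S).
Proof.
move=> /inR_kfam [c [hc ->]]; rewrite fam_dxi //; apply: inR_fam_intro.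
  move=> t _; exact: smooth_scale.
move=> a /eqP ha; case aj: (a j : nat) => [|m].
  by right => y; rewrite mul0r.
left.
have h : (\sum_i (a i : nat))%N = (\sum_i (a i - (i == j))).+1%N.
  rewrite (bigD1 j) //= [in RHS](bigD1 j) //= eqxx aj subn1 /= addSn.
  congr (_ + _).+1; apply: eq_bigr => i ij; by rewrite (negbTE ij) subn0.
by move: h; rewrite ha => /(f_equal predn) /= ->.
Qed.

Lemma mono_mulxi (e : I -> nat) i (xi : pt) :
  xi 0 i * mono e xi = mono (fun i' => e i' + (i' == i))%N xi.
Proof.
rewrite /mono (bigD1 i) //= [in RHS](bigD1 i) //= eqxx addn1 exprS mulrA.
congr (_ * _); apply: eq_bigr => i' ii; by rewrite (negbTE ii) addn0.
Qed.

Lemma inR_mulxi k (S : sym) i : inR k S -> inR k.+1 (fun x xi => xi 0 i * S x xi).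
Proof.
move=> /inR_kfam [c [hc ->]].
apply: (@inR_ext _ _ (fam _ (index_enum {ffun I -> 'I_k.+1})
   (fun a => (\sum_i (a i : nat) == k)%N) c (fun a i' => a i' + (i' == i))%N)).
  move=> x xi; rewrite /kfam /fam big_distrr /=; apply: eq_bigr => a _.
  by rewrite mulrCA mono_mulxi.
apply: inR_fam_intro => // a /eqP ha; left.
by rewrite big_split /= ha (bigD1 i) //= eqxx big1 ?addn0 ?addn1 // => i2 /negbTE ->.
Qed.

Lemma dxi_dx k (S : sym) i j x xi : inR k S ->
  dxi j (dx i S) x xi = dx i (dxi j S) x xi.
Proof.
move=> /inR_kfam [c [hc ->]]; rewrite fam_dx // !fam_dxi fam_dx; last first.
  move=> t _; exact: smooth_scale.
rewrite /fam; apply: eq_bigr => a _; congr (_ * _).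
by rewrite pdZ //; exact: smooth_der.
Qed.

End P2.


Section P3.
Variables (R : realType) (n : nat).
Local Notation pt := (pt R n).
Local Notation sym := (sym R n).
Local Notation I := ('I_(dimM n)).
Local Notation ev := (@ev R n).
Local Notation inR := (@inR R n).
Local Notation qi := (@qi n).
Local Notation pi_ := (@pi_ n).
Local Notation ti := (@ti n).

Lemma qiV (i : 'I_n) : (qi i : nat) = i.
Proof. rewrite /Defs.qi inordK //; apply: (leq_trans (ltn_ord i)); rewrite /dimM; lia. Qed.
Lemma piV (i : 'I_n) : (pi_ i : nat) = (n + i)%N.
Proof. rewrite /Defs.pi_ inordK //; have := ltn_ord i; rewrite /dimM; lia. Qed.
Lemma tiV : (ti : nat) = (2 * n)%N.
Proof. by rewrite /Defs.ti inordK. Qed.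

Lemma eq_qq (i i' : 'I_n) : (qi i == qi i') = (i == i').
Proof. by rewrite -val_eqE /= !qiV. Qed.
Lemma eq_pp (i i' : 'I_n) : (pi_ i == pi_ i') = (i == i').
Proof. by rewrite -val_eqE /= !piV eqn_add2l. Qed.
Lemma eq_qp (i i' : 'I_n) : (qi i == pi_ i') = false.
Proof. rewrite -val_eqE /= qiV piV; have := ltn_ord i; lia. Qed.
Lemma eq_pq (i i' : 'I_n) : (pi_ i == qi i') = false.
Proof. by rewrite eq_sym eq_qp. Qed.
Lemma eq_qt (i : 'I_n) : (qi i == ti) = false.
Proof. rewrite -val_eqE /= qiV tiV; have := ltn_ord i; lia. Qed.
Lemma eq_tq (i : 'I_n) : (ti == qi i) = false.
Proof. by rewrite eq_sym eq_qt. Qed.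
Lemma eq_pt (i : 'I_n) : (pi_ i == ti) = false.
Proof. rewrite -val_eqE /= piV tiV; have := ltn_ord i; lia. Qed.
Lemma eq_tp (i : 'I_n) : (ti == pi_ i) = false.
Proof. by rewrite eq_sym eq_pt. Qed.

Lemma sum_I (f : I -> R) :
  \sum_(j : I) f j = \sum_(i < n) f (qi i) + \sum_(i < n) f (pi_ i) + f ti.
Proof.
pose g (m : nat) := f (inord m).
have -> : \sum_(j : I) f j = \sum_(0 <= m < (2 * n).+1) g m.
  rewrite big_mkord; apply: eq_bigr => j _; by rewrite /g inord_val.
rewrite big_nat_recr //= (@big_cat_nat _ _ _ n) //=; last by lia.
rewrite big_mkord.
have e : \sum_(0 <= m < n) g (m + n)%N = \sum_(0 + n <= m < n + n) g m.
  by rewrite big_addn addnK.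
rewrite add0n in e.
have h2 : (2 * n = n + n)%N by lia.
rewrite h2 -e big_mkord.
have -> : g (n + n)%N = f ti by rewrite /g /Defs.ti; congr (f (inord _)); lia.
congr (_ + _ + _); apply: eq_bigr => i _; rewrite /g /Defs.pi_ //.
by rewrite addnC.
Qed.

Definition mk (fq fp : 'I_n -> R) (ft : R) (j : I) : R :=
  if @insub nat (fun m => (m < n)%N) 'I_n (j : nat) is Some i then fq i
  else if @insub nat (fun m => (m < n)%N) 'I_n (j - n)%N is Some i then fp i
  else ft.

Lemma mk_q fq fp ft i : mk fq fp ft (qi i) = fq i.
Proof. by rewrite /mk qiV valK. Qed.
Lemma mk_p fq fp ft i : mk fq fp ft (pi_ i) = fp i.
Proof.
rewrite /mk piV insubF; last by lia.
by rewrite addKn valK.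
Qed.
Lemma mk_t fq fp ft : mk fq fp ft ti = ft.
Proof.
rewrite /mk tiV insubF; last by lia.
by rewrite insubF //; lia.
Qed.

Lemma mk_lin (h : R) fq1 fp1 ft1 fq2 fp2 ft2 fq3 fp3 ft3 :
  (forall i, fq3 i = h * fq1 i + fq2 i) -> (forall i, fp3 i = h * fp1 i + fp2 i) ->
  ft3 = h * ft1 + ft2 ->
  forall j, mk fq3 fp3 ft3 j = h * mk fq1 fp1 ft1 j + mk fq2 fp2 ft2 j.
Proof.
move=> hq hp ht j; rewrite /mk.
case: insub => [i|]; first exact: hq.
case: insub => [i|]; first exact: hp.
exact: ht.
Qed.

Definition lf (w d : I -> R) := \sum_(j : I) w j * d j.

Lemma lf_split w d : lf w d =
  \sum_(i < n) w (qi i) * d (qi i) + \sum_(i < n) w (pi_ i) * d (pi_ i) + w ti * d ti.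
Proof. exact: sum_I. Qed.

Lemma lf_mk fq fp ft d : lf (mk fq fp ft) d =
  \sum_(i < n) fq i * d (qi i) + \sum_(i < n) fp i * d (pi_ i) + ft * d ti.
Proof.
rewrite lf_split mk_t; congr (_ + _ + _); apply: eq_bigr => i _.
  by rewrite mk_q. by rewrite mk_p.
Qed.

Lemma lf_add w d1 d2 : lf w (fun j => d1 j + d2 j) = lf w d1 + lf w d2.
Proof. rewrite /lf -big_split; apply: eq_bigr => j _; by rewrite mulrDr. Qed.
Lemma lf_scale w a d : lf w (fun j => a * d j) = a * lf w d.
Proof. rewrite /lf big_distrr; apply: eq_bigr => j _; by rewrite mulrCA. Qed.
Lemma lf_sub w d1 d2 : lf w (fun j => d1 j - d2 j) = lf w d1 - lf w d2.
Proof.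
rewrite /lf -sumrB; apply: eq_bigr => j _; by rewrite mulrBr.
Qed.
Lemma lf_sum (T : Type) (s : seq T) (P : pred T) w (F : T -> I -> R) :
  lf w (fun j => \sum_(t <- s | P t) F t j) = \sum_(t <- s | P t) lf w (F t).
Proof.
rewrite /lf; under eq_bigr do rewrite big_distrr.
by rewrite exchange_big.
Qed.
Lemma lfC w d : lf w d = lf d w.
Proof. by apply: eq_bigr => j _; rewrite mulrC. Qed.
Lemma lf_ex w1 w2 (M : I -> I -> R) :
  lf w1 (fun m => lf w2 (fun j => M j m)) = lf w2 (fun j => lf w1 (fun m => M j m)).
Proof.
rewrite /lf; under eq_bigr do rewrite big_distrr.
rewrite exchange_big; apply: eq_bigr => j _; rewrite big_distrr; apply: eq_bigr => m _.
rewrite /=; ring.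
Qed.

Lemma row_sum (w : I -> R) : (\row_j w j : pt) = \sum_(j : I) w j *: ev j.
Proof.
apply/matrixP => a b; rewrite !mxE summxE (bigD1 b) //= big1 ?addr0.
  by rewrite !mxE (ord1 a) !eqxx mulr1.
by move=> j jb; rewrite !mxE [b == j]eq_sym (negbTE jb) andbF mulr0.
Qed.

Lemma lf_lin (G : pt -> R) (hG : forall (h : R) z1 z2, G (h *: z1 + z2) = h * G z1 + G z2) w :
  lf w (fun m => G (ev m)) = G (\row_j w j).
Proof.
have G0 : G 0 = 0.
  have := hG 1 0 0; rewrite scale1r addr0 mul1r => h.
  have : G 0 + G 0 - G 0 = G 0 - G 0 by rewrite -h.
  by rewrite addrK subrr.
rewrite row_sum /lf; elim: (index_enum I) => [|j s IH].
  by rewrite !big_nil G0.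
by rewrite !big_cons hG IH.
Qed.


Lemma lf_delta w (c : I) (s : R) : lf w (fun m => (c == m)%:R * s) = w c * s.
Proof.
rewrite /lf (bigD1 c) //= eqxx mul1r big1 ?addr0 // => j jc.
by rewrite eq_sym (negbTE jc) mul0r mulr0.
Qed.

Lemma lf_ev w (c : I) : lf w (fun m => ev m 0 c) = w c.
Proof.
rewrite /lf (bigD1 c) //= evE eqxx mulr1 big1 ?addr0 // => j jc.
by rewrite evE eq_sym (negbTE jc) mulr0.
Qed.

Definition wE (x : pt) := mk (fun i => x 0 (qi i)) (fun i => x 0 (pi_ i)) 0.
Definition wD (x v : pt) := mk (fun i => - v 0 (pi_ i) + v 0 ti * x 0 (qi i))
  (fun i => v 0 (qi i) + v 0 ti * x 0 (pi_ i)) (- Esxi x v).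
Definition wI1 (v : pt) := mk (fun i => 2^-1 * v 0 (pi_ i)) (fun i => - (2^-1 * v 0 (qi i))) 0.
Definition wI (v : pt) := mk (fun i => 2^-1 * v 0 (pi_ i)) (fun i => - (2^-1 * v 0 (qi i))) (- 2^-1).

Lemma Es_lf (T : sym) x xi : Es T x xi = lf (wE x) (fun j => dx j T x xi).
Proof.
rewrite lf_mk mul0r addr0 /Es big_split /= addrC //.
Qed.

Lemma Dop_lf (T : sym) x xi : Dop T x xi = lf (wD x xi) (fun j => dx j T x xi).
Proof.
rewrite lf_mk /Dop /Es.
have e1 : \sum_(i < n) (- xi 0 (pi_ i) + xi 0 ti * x 0 (qi i)) * dx (qi i) T x xi +
   \sum_(i < n) (xi 0 (qi i) + xi 0 ti * x 0 (pi_ i)) * dx (pi_ i) T x xi =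
   \sum_(i < n) (xi 0 (qi i) * dx (pi_ i) T x xi - xi 0 (pi_ i) * dx (qi i) T x xi) +
   xi 0 ti * \sum_(i < n) (x 0 (pi_ i) * dx (pi_ i) T x xi + x 0 (qi i) * dx (qi i) T x xi).
  rewrite big_distrr -!big_split /=; apply: eq_bigr => i _; ring.
rewrite e1; ring.
Qed.

Lemma ialpha_lf (T : sym) x xi : ialpha T x xi = lf (wI x) (fun m => dxi m T x xi).
Proof.
rewrite lf_mk /ialpha.
have e1 : \sum_(i < n) 2^-1 * x 0 (pi_ i) * dxi (qi i) T x xi +
   \sum_(i < n) - (2^-1 * x 0 (qi i)) * dxi (pi_ i) T x xi =
   2^-1 * \sum_(i < n) (x 0 (pi_ i) * dxi (qi i) T x xi - x 0 (qi i) * dxi (pi_ i) T x xi).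
  rewrite big_distrr -!big_split /=; apply: eq_bigr => i _; ring.
rewrite e1; ring.
Qed.

Lemma Esxi_lin x (h : R) (z1 z2 : pt) : Esxi x (h *: z1 + z2) = h * Esxi x z1 + Esxi x z2.
Proof.
rewrite /Esxi big_distrr -big_split /=; apply: eq_bigr => i _; rewrite !mxE; ring.
Qed.

Lemma wD_lin x j (h : R) (z1 z2 : pt) : wD x (h *: z1 + z2) j = h * wD x z1 j + wD x z2 j.
Proof.
apply: mk_lin => [i|i|]; rewrite ?Esxi_lin ?mxE; ring.
Qed.

Lemma wI1_lin j (h : R) (z1 z2 : pt) : wI1 (h *: z1 + z2) j = h * wI1 z1 j + wI1 z2 j.
Proof. apply: mk_lin => [i|i|]; rewrite ?mxE; ring. Qed.

Lemma wI_aff j (h : R) (z1 z2 : pt) : wI (h *: z1 + z2) j = h * wI1 z1 j + wI z2 j.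
Proof. apply: mk_lin => [i|i|]; rewrite ?mxE; ring. Qed.

Lemma lfwD_lin x d (h : R) (z1 z2 : pt) :
  lf (wD x (h *: z1 + z2)) d = h * lf (wD x z1) d + lf (wD x z2) d.
Proof.
rewrite /lf big_distrr -big_split /=; apply: eq_bigr => j _; rewrite wD_lin; ring.
Qed.

Lemma lfwI1_lin e (h : R) (z1 z2 : pt) :
  lf (wI1 (h *: z1 + z2)) e = h * lf (wI1 z1) e + lf (wI1 z2) e.
Proof.
rewrite /lf big_distrr -big_split /=; apply: eq_bigr => j _; rewrite wI1_lin; ring.
Qed.

Lemma T1_zero x d : lf (wD x (\row_j wI x j)) d = 0.
Proof.
rewrite lf_mk !mxE /wI mk_t.
have -> : Esxi x (\row_j mk (fun i => 2^-1 * x 0 (pi_ i)) (fun i => - (2^-1 * x 0 (qi i))) (- 2^-1) j) = 0.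
  rewrite /Esxi big1 // => i _; rewrite !mxE mk_p mk_q; ring.
rewrite !big1 //; [ring | |] => i _; rewrite !mxE ?mk_p ?mk_q; ring.
Qed.

Lemma T2_eq x xi e :
  lf (wI1 (\row_j wD x xi j)) e = 2^-1 * lf (fun j => xi 0 j) e + xi 0 ti * lf (wI x) e.
Proof.
rewrite lf_mk lf_split lf_mk.
under eq_bigr => i _ do rewrite !mxE /wD mk_p.
under [X in _ + X + _]eq_bigr => i _ do rewrite !mxE /wD mk_q.
have e1 : \sum_(i < n) 2^-1 * (xi 0 (qi i) + xi 0 ti * x 0 (pi_ i)) * e (qi i) =
  2^-1 * \sum_(i < n) xi 0 (qi i) * e (qi i) +
  xi 0 ti * \sum_(i < n) 2^-1 * x 0 (pi_ i) * e (qi i).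
  rewrite !big_distrr -big_split /=; apply: eq_bigr => i _; ring.
have e2 : \sum_(i < n) - (2^-1 * (- xi 0 (pi_ i) + xi 0 ti * x 0 (qi i))) * e (pi_ i) =
  2^-1 * \sum_(i < n) xi 0 (pi_ i) * e (pi_ i) +
  xi 0 ti * \sum_(i < n) - (2^-1 * x 0 (qi i)) * e (pi_ i).
  rewrite !big_distrr -big_split /=; apply: eq_bigr => i _; ring.
rewrite e1 e2; ring.
Qed.

End P3.


Section P4.
Variables (R : realType) (n : nat).
Local Notation pt := (pt R n).
Local Notation sym := (sym R n).
Local Notation I := ('I_(dimM n)).
Local Notation ev := (@ev R n).
Local Notation inR := (@inR R n).
Local Notation qi := (@qi n).
Local Notation pi_ := (@pi_ n).
Local Notation ti := (@ti n).

Lemma der_aff (G L : pt -> R)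
  (hG : forall (h : R) z1 z2, G (h *: z1 + z2) = h * L z1 + G z2) (xi v : pt) :
  derivable G xi v /\ derive G xi v = L v.
Proof.
have key : \forall h \near dnbhs (0:R), h^-1 *: ((G \o shift xi) (h *: v) - G xi) = L v.
  near=> h.
  have hn : h != 0 by near: h; exact: nbhs_dnbhs_neq.
  rewrite /= hG addrK /GRing.scale /= mulrA mulVf // mul1r //.
split.
  apply/cvg_ex; exists (L v); exact: cvg_near_cst key.
exact: lim_near_cst key.
Unshelve. all: by end_near.
Qed.

Lemma der_lfW (W L F : I -> pt -> R)
  (hW : forall j (h : R) z1 z2, W j (h *: z1 + z2) = h * L j z1 + W j z2)
  (xi v : pt) : (forall j, derivable (F j) xi v) ->
  derive (fun z => lf (fun j => W j z) (fun j => F j z)) xi v =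
    lf (fun j => W j xi) (fun j => derive (F j) xi v) + lf (fun j => L j v) (fun j => F j xi).
Proof.
move=> hF.
have [h1 h2] := @der_big R n _ (index_enum I) xpredT (fun j z => W j z * F j z) xi v
  (fun j _ => ltac:(apply: pvM; [exact: (der_aff (hW j) xi v).1 | exact: hF])).
rewrite /lf h2 -big_split /=; apply: eq_bigr => j _.
rewrite pdM; [|exact: (der_aff (hW j) xi v).1|exact: hF].
rewrite (der_aff (hW j) xi v).2; ring.
Qed.

Lemma lf_ext (w d1 d2 : I -> R) : (forall j, d1 j = d2 j) -> lf w d1 = lf w d2.
Proof. by move=> h; apply: eq_bigr => j _; rewrite h. Qed.

Lemma lf0 (w : I -> R) : lf w (fun=> 0) = 0.
Proof. by rewrite /lf big1 // => j _; rewrite mulr0. Qed.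

Lemma inR_Es k (S : sym) : inR k S -> inR k (Es S).
Proof.
move=> hS; rewrite /Es; apply: inR_big => i _; apply: inR_add;
  apply: inR_mulx; (try exact: smooth_coord); exact: inR_dx.
Qed.

Lemma inR_Dop k (S : sym) : inR k S -> inR k.+1 (Dop S).
Proof.
move=> hS; rewrite /Dop; apply: inR_sub; first apply: inR_add.
- apply: inR_big => i _; apply: inR_sub; apply: inR_mulxi; exact: inR_dx.
- apply: inR_mulxi; exact: inR_Es.
apply: (@inR_ext _ _ _ _ (fun x xi => \sum_(i < n) (x 0 (pi_ i) * (xi 0 (pi_ i) * dx ti S x xi)
   + x 0 (qi i) * (xi 0 (qi i) * dx ti S x xi)))).
  move=> x xi; rewrite /Esxi big_distrl /=; apply: eq_bigr => i _; ring.
apply: inR_big => i _; apply: inR_add; apply: inR_mulx; (try exact: smooth_coord);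
  apply: inR_mulxi; exact: inR_dx.
Qed.

Lemma inR_ialpha k (S : sym) : inR k S -> inR k.-1 (ialpha S).
Proof.
move=> hS; rewrite /ialpha; apply: inR_scale; apply: inR_sub; last exact: inR_dxi.
apply: inR_big => i _; apply: inR_sub; apply: inR_mulx; (try exact: smooth_coord);
  exact: inR_dxi.
Qed.

Lemma inR_Xop k delta m (S : sym) : inR k S -> inR k.+1 (Xop delta m S).
Proof.
move=> hS; rewrite /Xop; apply: inR_add; first exact: inR_Dop.
apply: (@inR_ext _ _ _ _ (fun x xi => xi 0 ti * ((2 * (n.+1)%:R * delta + m%:R) * S x xi))).
  by move=> x xi; ring.
apply: inR_mulxi; exact: inR_scale.
Qed.

Lemma dxi_Dop k (S : sym) m x xi : inR k S ->
  dxi m (Dop S) x xi = lf (wD x xi) (fun j => dx j (dxi m S) x xi) +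
                        lf (wD x (ev m)) (fun j => dx j S x xi).
Proof.
move=> hS.
have -> : dxi m (Dop S) x xi =
    derive (fun z => lf (fun j => wD x z j) (fun j => dx j S x z)) xi (ev m).
  rewrite /dxi; congr derive; apply: funext => z; exact: Dop_lf.
rewrite (der_lfW (W := fun j z => wD x z j) (L := fun j z => wD x z j)
   (F := fun j z => dx j S x z)); last 2 first.
- by move=> j h z1 z2; rewrite wD_lin.
- move=> j; exact: (@inR_derxi _ _ k _ x xi (ev m) (inR_dx j hS)).
have E : forall j, dx j (dxi m S) x xi = derive (fun z => dx j S x z) xi (ev m).
  by move=> j; rewrite -(dxi_dx j m x xi hS).
by rewrite [in RHS](lf_ext (wD x xi) E).
Qed.

Lemma dx_ialpha k (S : sym) j x xi : inR k S ->
  dx j (ialpha S) x xi = lf (wI x) (fun m => dx j (dxi m S) x xi) +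
                         lf (wI1 (ev j)) (fun m => dxi m S x xi).
Proof.
move=> hS.
have -> : dx j (ialpha S) x xi =
    derive (fun y => lf (fun m => wI y m) (fun m => dxi m S y xi)) x (ev j).
  rewrite /dx; congr derive; apply: funext => y; exact: ialpha_lf.
rewrite (der_lfW (W := fun m y => wI y m) (L := fun m y => wI1 y m)
   (F := fun m y => dxi m S y xi)); last 2 first.
- by move=> m h z1 z2; rewrite wI_aff.
- move=> m; exact: (@inR_derx _ _ k.-1 _ xi x (ev j) (inR_dxi m hS)).
by [].
Qed.

Lemma dxi_Xop k delta m' (S : sym) m x xi : inR k S ->
  dxi m (Xop delta m' S) x xi = dxi m (Dop S) x xi +
    (2 * (n.+1)%:R * delta + m'%:R) * ((ti == m)%:R * S x xi + xi 0 ti * dxi m S x xi).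
Proof.
move=> hS; rewrite /dxi /Xop.
set C := (2 * (n.+1)%:R * delta + m'%:R).
have hc : derivable (fun z : pt => C * z 0 ti) xi (ev m).
  exact: (@pvZ R n (fun z => z 0 ti) C xi (ev m) (@derivable_coord R n ti xi (ev m))).
rewrite pdD; last 2 first.
- exact: (@inR_derxi R n k.+1 (Dop S) x xi (ev m) (inR_Dop hS)).
- exact: (@pvM R n _ _ xi (ev m) hc (@inR_derxi R n k S x xi (ev m) hS)).
rewrite pdM; [|exact: hc|exact: (@inR_derxi R n k S x xi (ev m) hS)].
rewrite pdZ ?derive_coord ?evE; last exact: (@derivable_coord R n ti xi (ev m)).
ring.
Qed.

Lemma Euler k (S : sym) (x xi : pt) : inR k S ->
  lf (fun j => xi 0 j) (fun m => dxi m S x xi) = k%:R * S x xi.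
Proof.
move=> /inR_kfam [c [hc ->]]; rewrite /kfam.
under lf_ext => m do rewrite fam_dxi.
rewrite /lf /fam.
under eq_bigr => m _ do rewrite big_distrr.
rewrite exchange_big /= big_distrr; apply: eq_bigr => a /eqP ha /=.
have key : forall m : I, xi 0 m * ((a m : nat)%:R * c a x *
   mono (fun i => (a i - (i == m))%N) xi) = (a m : nat)%:R * (c a x * mono (fun i => a i) xi).
  move=> m; case am: (a m : nat) => [|p]; first by rewrite !mul0r mulr0.
  have E : (fun i' => (a i' - (i' == m)) + (i' == m))%N = (fun i => (a i : nat)).
    apply: funext => i; case: (eqVneq i m) => [->|im]; first by rewrite am subn1 addn1.
    by rewrite subn0 addn0.
  rewrite -E -mono_mulxi; ring.
under eq_bigr => m _ do rewrite key.
by rewrite -big_distrl /= -natr_sum ha mulrA.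
Qed.

Lemma ialpha0 (S : sym) x xi : inR 0 S -> ialpha S x xi = 0.
Proof.
move=> /inR_kfam [c [hc ->]]; rewrite ialpha_lf -[RHS](lf0 (wI x)); apply: lf_ext => m.
rewrite /kfam fam_dxi /fam big1 // => a _.
have -> : (a m : nat) = 0%N.
  by case: (a m) => -[].
by rewrite !mul0r.
Qed.

Lemma Dop0 (x xi : pt) : Dop (fun (_ _ : pt) => 0 : R) x xi = 0.
Proof.
rewrite Dop_lf -[RHS](lf0 (wD x xi)); apply: lf_ext => j.
by rewrite /dx pdC.
Qed.

End P4.


Section P5.
Variables (R : realType) (n : nat) (delta : R).
Local Notation pt := (pt R n).
Local Notation sym := (sym R n).
Local Notation I := ('I_(dimM n)).
Local Notation ev := (@ev R n).
Local Notation inR := (@inR R n).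
Local Notation qi := (@qi n).
Local Notation pi_ := (@pi_ n).
Local Notation ti := (@ti n).
Local Notation C0 := (2 * (n.+1)%:R * delta).

Lemma comm1 k m (S : sym) x xi : inR k S ->
  ialpha (Xop delta m S) x xi = Dop (ialpha S) x xi +
    (C0 + m%:R - 1) * xi 0 ti * ialpha S x xi - 2^-1 * (k%:R + C0 + m%:R) * S x xi.
Proof.
move=> hS.
have HD : Dop (ialpha S) x xi =
  lf (wD x xi) (fun j => lf (wI x) (fun m' => dx j (dxi m' S) x xi)) +
  (2^-1 * lf (fun j => xi 0 j) (fun m' => dxi m' S x xi) + xi 0 ti * ialpha S x xi).
  rewrite Dop_lf.
  under lf_ext => j do rewrite (dx_ialpha j x xi hS).
  rewrite lf_add (lf_lin (G := fun v => lf (wI1 v) (fun m' => dxi m' S x xi))); last first.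
    by move=> h z1 z2; rewrite lfwI1_lin.
  by rewrite T2_eq -ialpha_lf.
rewrite HD (Euler x xi hS) ialpha_lf.
under lf_ext => m' do rewrite (dxi_Xop delta m m' x xi hS) (dxi_Dop m' x xi hS).
rewrite !lf_add (lf_lin (G := fun v => lf (wD x v) (fun j => dx j S x xi))); last first.
  by move=> h z1 z2; rewrite lfwD_lin.
rewrite T1_zero lf_scale lf_add lf_delta lf_scale -ialpha_lf lf_ex.
have -> : wI x ti = - 2^-1 by rewrite /wI mk_t.
set A := lf _ _.
set I0 := ialpha S x xi.
ring.
Qed.


Definition Pol (S : sym) := exists k, inR k S.

Lemma dx_lin (T : Type) (s : seq T) (P : pred T) (a : T -> R) (F : T -> sym) j x xi :
  (forall t, P t -> Pol (F t)) ->
  dx j (fun x xi => \sum_(t <- s | P t) a t * F t x xi) x xi =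
  \sum_(t <- s | P t) a t * dx j (F t) x xi.
Proof.
move=> hF; rewrite /dx.
have hd : forall t, P t -> derivable (fun y => a t * F t y xi) x (ev j).
  move=> t Pt; have [k hk] := hF t Pt.
  exact: (@pvZ R n _ (a t) x (ev j) (@inR_derx R n k (F t) xi x (ev j) hk)).
rewrite (@der_big R n _ s P (fun t y => a t * F t y xi) x (ev j) hd).2.
apply: eq_bigr => t Pt; have [k hk] := hF t Pt.
by rewrite pdZ //; exact: (@inR_derx R n k (F t) xi x (ev j) hk).
Qed.

Lemma dxi_lin (T : Type) (s : seq T) (P : pred T) (a : T -> R) (F : T -> sym) j x xi :
  (forall t, P t -> Pol (F t)) ->
  dxi j (fun x xi => \sum_(t <- s | P t) a t * F t x xi) x xi =
  \sum_(t <- s | P t) a t * dxi j (F t) x xi.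
Proof.
move=> hF; rewrite /dxi.
have hd : forall t, P t -> derivable (fun z => a t * F t x z) xi (ev j).
  move=> t Pt; have [k hk] := hF t Pt.
  exact: (@pvZ R n _ (a t) xi (ev j) (@inR_derxi R n k (F t) x xi (ev j) hk)).
rewrite (@der_big R n _ s P (fun t z => a t * F t x z) xi (ev j) hd).2.
apply: eq_bigr => t Pt; have [k hk] := hF t Pt.
by rewrite pdZ //; exact: (@inR_derxi R n k (F t) x xi (ev j) hk).
Qed.

Lemma Xop_lin m (T : Type) (s : seq T) (P : pred T) (a : T -> R) (F : T -> sym) :
  (forall t, P t -> Pol (F t)) ->
  Xop delta m (fun x xi => \sum_(t <- s | P t) a t * F t x xi) =
  fun x xi => \sum_(t <- s | P t) a t * Xop delta m (F t) x xi.
Proof.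
move=> hF; apply: funext => x; apply: funext => xi.
rewrite /Xop Dop_lf (lf_ext _ (fun j => @dx_lin T s P a F j x xi hF)) lf_sum.
rewrite !big_distrr -big_split /=; apply: eq_bigr => t Pt.
rewrite lf_scale -Dop_lf; ring.
Qed.

Lemma ialpha_lin (T : Type) (s : seq T) (P : pred T) (a : T -> R) (F : T -> sym) :
  (forall t, P t -> Pol (F t)) ->
  ialpha (fun x xi => \sum_(t <- s | P t) a t * F t x xi) =
  fun x xi => \sum_(t <- s | P t) a t * ialpha (F t) x xi.
Proof.
move=> hF; apply: funext => x; apply: funext => xi.
rewrite ialpha_lf (lf_ext _ (fun j => @dxi_lin T s P a F j x xi hF)) lf_sum.
apply: eq_bigr => t Pt; by rewrite lf_scale -ialpha_lf.
Qed.

Lemma dx_add2 (A B : sym) (c : R) j x xi : Pol A -> Pol B ->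
  dx j (fun x xi => A x xi + c * B x xi) x xi = dx j A x xi + c * dx j B x xi.
Proof.
move=> [k1 h1] [k2 h2]; rewrite /dx.
have dA := @inR_derx R n k1 A xi x (ev j) h1.
have dB := @inR_derx R n k2 B xi x (ev j) h2.
rewrite pdD //; last exact: (@pvZ R n _ c x (ev j) dB).
by rewrite pdZ.
Qed.

Lemma Xop_add2 m (A B : sym) (c : R) : Pol A -> Pol B ->
  Xop delta m (fun x xi => A x xi + c * B x xi) =
  fun x xi => Xop delta m A x xi + c * Xop delta m B x xi.
Proof.
move=> hA hB; apply: funext => x; apply: funext => xi.
rewrite /Xop Dop_lf (lf_ext _ (fun j => dx_add2 c j x xi hA hB)) lf_add lf_scale -!Dop_lf.
ring.
Qed.

Lemma ialpha_0 : ialpha (fun _ _ => 0 : R) = (fun (_ _ : pt) => 0 : R).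
Proof.
apply: funext => x; apply: funext => xi.
rewrite ialpha_lf -[RHS](lf0 (wI x)); apply: lf_ext => m; by rewrite /dxi pdC.
Qed.

Lemma Xop_0 m : Xop delta m (fun _ _ => 0 : R) = (fun (_ _ : pt) => 0 : R).
Proof.
apply: funext => x; apply: funext => xi; by rewrite /Xop Dop0 mulr0 addr0.
Qed.

Lemma Xit_0 m l : Xit delta m l (fun _ _ => 0 : R) = (fun (_ _ : pt) => 0 : R).
Proof. elim: l => [//|l IH] /=; by rewrite IH Xop_0. Qed.

Lemma iter_0 l : iter l (@ialpha R n) (fun _ _ => 0 : R) = (fun (_ _ : pt) => 0 : R).
Proof. elim: l => [//|l IH] /=; by rewrite IH ialpha_0. Qed.

Lemma inR_iter k l (S : sym) : inR k S -> inR (k - l) (iter l (@ialpha R n) S).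
Proof.
move=> hS; elim: l => [|l IH]; first by rewrite subn0.
rewrite iterS subnS; exact: inR_ialpha.
Qed.

Lemma inR_Xit k m l (S : sym) : inR k S -> inR (k + l) (Xit delta m l S).
Proof.
move=> hS; elim: l => [|l IH]; first by rewrite addn0.
rewrite /= addnS; exact: inR_Xop.
Qed.

Lemma commX k (S : sym) : inR k S ->
  ialpha (Xop delta k S) = fun x xi => Xop delta (k - 1) (ialpha S) x xi + r n delta 1 k * S x xi.
Proof.
move=> hS; apply: funext => x; apply: funext => xi; rewrite (comm1 k x xi hS).
case: k hS => [|k] hS.
  have hz : ialpha S = fun _ _ => 0 by apply: funext => y; apply: funext => z; exact: ialpha0.
  rewrite hz Dop0 Xop_0 /r; ring.
rewrite /Xop /r subn1 /= -addn1 natrD; ring.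
Qed.

Lemma r_step l m : r n delta l.+2 m = r n delta l.+1 m + r n delta 1 (m + l.+1).
Proof. rewrite /r natrD !mulrSr mulr0n; ring. Qed.

Lemma comm_Xit m l (S : sym) : inR m S -> (0 < l)%N ->
  ialpha (Xit delta m l S) =
  fun x xi => Xit delta (m - 1) l (ialpha S) x xi + r n delta l m * Xit delta m l.-1 S x xi.
Proof.
move=> hS; case: l => [//|l] _; elim: l => [|l IH].
  by rewrite /= !addn0 (commX hS).
have hT := inR_Xit m l.+1 hS.
rewrite [Xit delta m l.+2 S]/= (commX hT) IH.
have hp1 : Pol (Xit delta (m - 1) l.+1 (ialpha S)).
  by exists (m.-1 + l.+1)%N; apply: inR_Xit; exact: inR_ialpha.
have hp2 : Pol (Xit delta m l S) by exists (m + l)%N; exact: inR_Xit.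
rewrite (Xop_add2 _ _ hp1 hp2).
have E : Xop delta (m + l.+1 - 1) (Xit delta (m - 1) l.+1 (ialpha S)) =
         Xit delta (m - 1) l.+2 (ialpha S).
  case: m hS hT hp1 hp2 IH => [|m] hS _ _ _ _.
    have hz : ialpha S = fun _ _ => 0 by apply: funext => y; apply: funext => z; exact: ialpha0.
    by rewrite hz !Xit_0 Xop_0.
  by rewrite [RHS]/= !subn1 /=.
apply: funext => x; apply: funext => xi.
rewrite E r_step /=.
have -> : (m + l.+1 - 1 = m + l)%N by lia.
ring.
Qed.

End P5.


Section P6.
Variables (R : realType) (n : nat) (delta : R).
Local Notation pt := (pt R n).
Local Notation sym := (sym R n).
Local Notation I := ('I_(dimM n)).
Local Notation inR := (@inR R n).
Local Notation Pol := (@Pol R n).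
Local Notation sop := (@sop R n delta).
Local Notation scomp := (@scomp R n delta).
Local Notation Xit := (@Xit R n delta).
Local Notation ia := (@ialpha R n).

Lemma inR_big_mem k (T : eqType) (s : seq T) (P : pred T) (F : T -> sym) :
  (forall t, t \in s -> P t -> inR k (F t)) ->
  inR k (fun x xi => \sum_(t <- s | P t) F t x xi).
Proof.
elim: s => [|t s IH] hF.
  by apply: inR_ext (@inR0 R n k) => x xi; rewrite big_nil.
have hs : forall t', t' \in s -> P t' -> inR k (F t').
  by move=> t' ht' Pt'; apply: hF => //; rewrite inE ht' orbT.
case Pt: (P t).
  apply: inR_ext (inR_add (hF t (mem_head _ _) Pt) (IH hs)) => x xi.
  by rewrite big_cons Pt.
by apply: inR_ext (IH hs) => x xi; rewrite big_cons Pt.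
Qed.

Lemma inR_sop j (S : sym) : inR j.-1 S -> inR j (sop j S).
Proof.
move=> hS; rewrite /Defs.sop; apply: inR_opp; apply: inR_big_mem => l.
rewrite mem_index_iota => /andP [h1 h2] _; apply: inR_scale.
have := inR_Xit delta (j - l) l (inR_iter l.-1 hS).
have -> : (j.-1 - l.-1 + l = j)%N by lia.
by [].
Qed.

Lemma inR_scomp m l (S : sym) : inR m S -> inR (m + l) (scomp m l S).
Proof.
move=> hS; elim: l => [|l IH]; first by rewrite addn0.
rewrite /= addnS; apply: inR_sop; exact: IH.
Qed.

Lemma Pol_iter l S : Pol S -> Pol (iter l ia S).
Proof. move=> [k hk]; exists (k - l)%N; exact: inR_iter. Qed.
Lemma Pol_Xit m l S : Pol S -> Pol (Xit m l S).
Proof. move=> [k hk]; exists (k + l)%N; exact: inR_Xit. Qed.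

Lemma iter_lin l (T : Type) (s : seq T) (P : pred T) (a : T -> R) (F : T -> sym) :
  (forall t, P t -> Pol (F t)) ->
  iter l ia (fun x xi => \sum_(t <- s | P t) a t * F t x xi) =
  fun x xi => \sum_(t <- s | P t) a t * iter l ia (F t) x xi.
Proof.
move=> hF; elim: l => [//|l IH]; rewrite iterS IH ialpha_lin //.
by move=> t Pt; apply: Pol_iter; exact: hF.
Qed.

Lemma Xit_lin m l (T : Type) (s : seq T) (P : pred T) (a : T -> R) (F : T -> sym) :
  (forall t, P t -> Pol (F t)) ->
  Xit m l (fun x xi => \sum_(t <- s | P t) a t * F t x xi) =
  fun x xi => \sum_(t <- s | P t) a t * Xit m l (F t) x xi.
Proof.
move=> hF; elim: l => [//|l IH] /=; rewrite IH Xop_lin //.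
by move=> t Pt; apply: Pol_Xit; exact: hF.
Qed.

Lemma sop_lin j (T : Type) (s : seq T) (P : pred T) (a : T -> R) (F : T -> sym) :
  (forall t, P t -> Pol (F t)) ->
  sop j (fun x xi => \sum_(t <- s | P t) a t * F t x xi) =
  fun x xi => \sum_(t <- s | P t) a t * sop j (F t) x xi.
Proof.
move=> hF; apply: funext => x; apply: funext => xi; rewrite /Defs.sop.
under eq_bigr => l _ do rewrite (@iter_lin _ T s P a F hF) (@Xit_lin _ _ T s P a (fun t => iter _ ia (F t)) (fun t Pt => Pol_iter _ (hF t Pt))).
under eq_bigr => l _ do rewrite big_distrr.
rewrite exchange_big /= -sumrN; apply: eq_bigr => t Pt.
rewrite mulrN big_distrr /=; congr (- _); apply: eq_bigr => l _; by rewrite mulrCA.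
Qed.

Lemma sop_0 j : sop j (fun _ _ => 0 : R) = (fun (_ _ : pt) => 0 : R).
Proof.
apply: funext => x; apply: funext => xi; rewrite /Defs.sop big1 ?oppr0 // => l _.
by rewrite iter_0 Xit_0 mulr0.
Qed.

Lemma b0 j : b n delta j 0 = 1.
Proof. by rewrite /b big_geq // invr1. Qed.

Lemma b_step j l : r n delta l.+1 (j - l.+1) != 0 ->
  b n delta j l.+1 * (- r n delta l.+1 (j - l.+1)) = b n delta j l.
Proof.
move=> hr; rewrite /b big_nat_recr //=.
set P := \prod_(1 <= m < l.+1) _.
have [->|hP] := eqVneq P 0; first by rewrite mul0r invr0 mul0r.
field; apply/andP; split => //; by rewrite oppr_eq0.
Qed.

Lemma rinv j (S : sym) : (1 <= j)%N -> inR j.-1 S ->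
  (forall l, (1 <= l <= j)%N -> r n delta l (j - l) != 0) ->
  ia (sop j S) = S.
Proof.
move=> hj hS hr.
have hz : iter j ia S = fun _ _ => 0.
  case: j hj hS hr => [//|j] _ hS _.
  have h0 := inR_iter j hS; rewrite /= subnn in h0.
  rewrite iterS; apply: funext => y; apply: funext => z; exact: ialpha0.
pose F l := Xit (j - l) l (iter l.-1 ia S).
have hP : forall l, true -> Pol (F l).
  move=> l _; apply: Pol_Xit; apply: Pol_iter; by exists j.-1.
have -> : sop j S = fun x xi => \sum_(1 <= l < j.+1) (- b n delta j l) * F l x xi.
  apply: funext => x; apply: funext => xi; rewrite /Defs.sop -sumrN.
  by apply: eq_bigr => l _; rewrite mulNr.
rewrite ialpha_lin //.
apply: funext => x; apply: funext => xi.
pose A p := Xit (j.-1 - p) p (iter p ia S) x xi.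
have hAj : A j = 0 by rewrite /A hz Xit_0.
have key : forall l, (1 <= l < j.+1)%N ->
  - b n delta j l * ia (F l) x xi = - b n delta j l * A l + b n delta j l.-1 * A l.-1.
  move=> l /andP [h1 h2].
  have hT : inR (j - l) (iter l.-1 ia S).
    have := inR_iter l.-1 hS; have -> : (j.-1 - l.-1 = j - l)%N by lia. by [].
  rewrite /F (comm_Xit delta hT h1).
  have E1 : Xit (j - l - 1) l (ia (iter l.-1 ia S)) x xi = A l.
    case: l h1 h2 hT => [//|l] _ _ _; rewrite /A -iterS /=.
    by have -> : (j - l.+1 - 1 = j.-1 - l.+1)%N by lia.
  have E2 : Xit (j - l) l.-1 (iter l.-1 ia S) x xi = A l.-1.
    by rewrite /A; have -> : (j - l = j.-1 - l.-1)%N by lia.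
  rewrite E1 E2.
  case: l h1 h2 hT E1 E2 => [//|l] _ h2 _ _ _.
  rewrite -(b_step (hr l.+1 _)) /=; last by lia.
  ring.
rewrite (eq_big_nat _ _ key) big_split /=.
rewrite big_nat_recr //= hAj mulr0 addr0.
have e : \sum_(1 <= i < j.+1) b n delta j i.-1 * A i.-1 = \sum_(0 <= i < j) b n delta j i * A i.
  by rewrite big_add1.
rewrite e (@big_ltn _ _ _ 0 j) // b0 mul1r.
rewrite addrCA -big_split /= big1 ?addr0; last by move=> i _; rewrite mulNr addNr.
by rewrite /A.
Qed.

End P6.


Section P7.
Variables (R : realType) (n : nat) (delta : R).
Local Notation pt := (pt R n).
Local Notation sym := (sym R n).
Local Notation inR := (@inR R n).
Local Notation Pol := (@Pol R n).
Local Notation sop := (@sop R n delta).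
Local Notation scomp := (@scomp R n delta).
Local Notation ia := (@ialpha R n).

Lemma r_nz k :
  (forall j p : nat, (1 <= j <= k)%N -> (j - 1 <= p <= 2 * j - 2)%N ->
     delta != - (p%:R / (2 * (n.+1)%:R))) ->
  forall j l, (1 <= l <= j)%N -> (j <= k)%N -> r n delta l (j - l) != 0.
Proof.
move=> H j l /andP [h1 h2] hjk.
have := H j (2 * j - l - 1)%N ltac:(lia) ltac:(lia).
apply: contra => /eqP hr; apply/eqP.
set p := (2 * j - l - 1)%N.
have hl : (l%:R / 2 : R) != 0.
  by rewrite mulf_neq0 // ?invr_eq0 ?pnatr_eq0; lia.
move: hr; rewrite /r mulNr => /eqP; rewrite oppr_eq0 mulf_eq0 (negbTE hl) /= => /eqP hr.
have e : (p.+1 = 2 * (j - l) + l)%N by rewrite /p; lia.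
have e' : p%:R + 1 = 2 * (j - l)%:R + l%:R :> R.
  by rewrite -[1 in LHS]/(1%:R) -natrD addn1 e natrD natrM.
have ep : p%:R = 2 * (j - l)%:R + l%:R - 1 :> R by rewrite -e' addrK.
have hn0 : (2 * (n.+1)%:R : R) != 0 by rewrite mulf_neq0 // pnatr_eq0.
apply: (mulfI hn0); rewrite mulrN [_ * (_ / _)]mulrC divfK // ep.
apply/eqP; rewrite -subr_eq0 opprK !addrA; exact/eqP.
Qed.

Lemma dxi_add2 (A B : sym) (c : R) j x xi : Pol A -> Pol B ->
  dxi j (fun x xi => A x xi + c * B x xi) x xi = dxi j A x xi + c * dxi j B x xi.
Proof.
move=> [k1 h1] [k2 h2]; rewrite /dxi.
have dA := @inR_derxi R n k1 A x xi (ev R j) h1.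
have dB := @inR_derxi R n k2 B x xi (ev R j) h2.
rewrite pdD //; last exact: (@pvZ R n _ c xi (ev R j) dB).
by rewrite pdZ.
Qed.

Lemma ialpha_add2 (A B : sym) (c : R) : Pol A -> Pol B ->
  ia (fun x xi => A x xi + c * B x xi) = fun x xi => ia A x xi + c * ia B x xi.
Proof.
move=> hA hB; apply: funext => x; apply: funext => xi.
rewrite ialpha_lf (lf_ext _ (fun j => dxi_add2 c j x xi hA hB)) lf_add lf_scale -!ialpha_lf.
by [].
Qed.

Lemma span_dec k : (forall j l, (1 <= l <= j)%N -> (j <= k)%N -> r n delta l (j - l) != 0) ->
  forall S : sym, inR k S ->
    exists T : nat -> sym,
      (forall l, (l <= k)%N -> inR (k - l) (T l) /\ (forall x xi, ia (T l) x xi = 0)) /\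
      (forall x xi, S x xi = \sum_(l < k.+1) scomp (k - l) l (T l) x xi).
Proof.
elim: k => [|k IH] hr S hS.
  exists (fun l => if l is 0 then S else fun _ _ => 0); split.
    by case=> // _; split => // x xi; exact: ialpha0.
  by move=> x xi; rewrite big_ord1.
have hr' : forall j l, (1 <= l <= j)%N -> (j <= k)%N -> r n delta l (j - l) != 0.
  by move=> j l h1 h2; apply: hr => //; lia.
have hIS : inR k (ia S) by exact: (inR_ialpha hS).
have [U [hU hUs]] := IH hr' _ hIS.
have hrk : forall l, (1 <= l <= k.+1)%N -> r n delta l (k.+1 - l) != 0.
  by move=> l hl; apply: hr.
have hsop : inR k.+1 (sop k.+1 (ia S)) by exact: inR_sop.
exists (fun l => if l is l'.+1 then U l' else fun x xi => S x xi + (-1) * sop k.+1 (ia S) x xi).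
split.
  case=> [_|l hl].
    split; first by apply: inR_add => //; exact: inR_scale.
    have pS : Pol S by exists k.+1.
    have pT : Pol (sop k.+1 (ia S)) by exists k.+1.
    move=> x xi; rewrite (ialpha_add2 (-1) pS pT).
    by rewrite (@rinv R n delta k.+1 (ia S) isT hIS hrk) mulN1r subrr.
  have [h1 h2] := hU l hl; split => //; by rewrite subSS.
move=> x xi; rewrite big_ord_recl.
rewrite (eq_bigr (fun i : 'I_k.+1 => 1 * sop k.+1 (scomp (k - i) i (U i)) x xi)); last first.
  move=> i _ /=; rewrite /bump /= add0n add1n subSS mul1r.
  by have -> : (k - i + i = k)%N by have := ltn_ord i; lia.
have hP : forall i : 'I_k.+1, true -> Pol (scomp (k - i) i (U i)).
  by move=> i _; exists (k - i + i)%N; apply: inR_scomp; exact: (hU i (ltn_ord i)).1.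
have SL := congr1 (fun f => f x xi) (@sop_lin R n delta k.+1 _ (index_enum 'I_k.+1) (fun _ => true) (fun=> 1) (fun i => scomp (k - i) i (U i)) hP).
rewrite /= in SL; rewrite -SL.
have -> : (fun x xi => \sum_(i < k.+1) 1 * scomp (k - i) i (U i) x xi) = ia S.
  apply: funext => y; apply: funext => z; rewrite hUs; apply: eq_bigr => i _.
  by rewrite mul1r.
rewrite /=; ring.
Qed.


Lemma direct_dec k : (forall j l, (1 <= l <= j)%N -> (j <= k)%N -> r n delta l (j - l) != 0) ->
  forall T : nat -> sym,
    (forall l, (l <= k)%N -> inR (k - l) (T l) /\ (forall x xi, ia (T l) x xi = 0)) ->
    (forall x xi, \sum_(l < k.+1) scomp (k - l) l (T l) x xi = 0) ->
    forall l, (l <= k)%N -> forall x xi, scomp (k - l) l (T l) x xi = 0.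
Proof.
elim: k => [|k IH] hr T hT hsum.
  by case=> // _ x xi; have := hsum x xi; rewrite big_ord1.
have hr' : forall j l, (1 <= l <= j)%N -> (j <= k)%N -> r n delta l (j - l) != 0.
  by move=> j l h1 h2; apply: hr => //; lia.
have hrk : forall l, (1 <= l <= k.+1)%N -> r n delta l (k.+1 - l) != 0.
  by move=> l hl; apply: hr.
have hP : forall l : 'I_k.+2, true -> Pol (scomp (k.+1 - l) l (T l)).
  move=> l _; exists (k.+1 - l + l)%N; apply: inR_scomp.
  by apply: (hT l _).1; have := ltn_ord l; lia.
have hZ : (fun x xi => \sum_(l < k.+2) 1 * scomp (k.+1 - l) l (T l) x xi) = fun _ _ => 0.
  apply: funext => x; apply: funext => xi.
  under eq_bigr do rewrite mul1r; exact: hsum.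
have hIZ := congr1 ia hZ.
rewrite ialpha_0 (@ialpha_lin R n _ (index_enum 'I_k.+2) (fun _ => true) (fun=> 1)
   (fun l : 'I_k.+2 => scomp (k.+1 - l) l (T l)) hP) in hIZ.
have hsum' : forall x xi, \sum_(i < k.+1) scomp (k - i) i (T i.+1) x xi = 0.
  move=> x xi; have := congr1 (fun f => f x xi) hIZ; rewrite /= big_ord_recl /=.
  rewrite mul1r (hT 0%N isT).2 add0r => H; rewrite -[RHS]H; apply: eq_bigr => i _.
  rewrite mul1r /bump /= add0n add1n subSS.
  have -> : (k - i + i = k)%N by have := ltn_ord i; lia.
  rewrite (@rinv R n delta k.+1 _ isT _ hrk) //.
  have := @inR_scomp R n delta (k - i)%N i (T i.+1) (hT i.+1 (ltn_ord i)).1.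
  by have -> : (k - i + i = k)%N by have := ltn_ord i; lia.
have hT' : forall l, (l <= k)%N -> inR (k - l) (T l.+1) /\ (forall x xi, ia (T l.+1) x xi = 0).
  move=> l hl; have := hT l.+1 hl; by rewrite subSS.
have hIH := IH hr' (fun l => T l.+1) hT' hsum'.
have Hz : forall i, (i <= k)%N -> scomp (k.+1 - i.+1) i.+1 (T i.+1) = fun _ _ => 0.
  move=> i hi; rewrite subSS /=.
  have -> : scomp (k - i) i (T i.+1) = fun _ _ => 0.
    by apply: funext => x; apply: funext => xi; exact: hIH.
  by rewrite sop_0.
case=> [_|l hl] x xi; last by rewrite Hz.
have := hsum x xi; rewrite big_ord_recl big1 ?addr0 //.
move=> i _; rewrite lift0 Hz //; exact: ltn_ord i.
Qed.

End P7.


Unset Implicit Arguments.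

Theorem corollary5p2 (R : realType) (n : nat) (delta : R) (k : nat) :
  (1 <= n)%N -> (1 <= k)%N ->
  (forall j p : nat, (1 <= j <= k)%N -> (j - 1 <= p <= 2 * j - 2)%N ->
     delta != - (p%:R / (2 * (n.+1)%:R))) ->
  [/\ (* each summand s^l(R^{k-l} cap ker i(alpha)) lies in R^k *)
      (forall (l : nat) (T : sym R n), (l <= k)%N ->
         inR (k - l) T -> (forall x xi, ialpha T x xi = 0) ->
         inR k (scomp delta (k - l) l T)),
      (* the summands span R^k *)
      (forall S : sym R n, inR k S ->
         exists T : nat -> sym R n,
           (forall l, (l <= k)%N ->
              inR (k - l) (T l) /\ (forall x xi, ialpha (T l) x xi = 0)) /\
           (forall x xi, S x xi =
              \sum_(l < k.+1) scomp delta (k - l) l (T l) x xi)) &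
      (* the sum is direct *)
      (forall T : nat -> sym R n,
         (forall l, (l <= k)%N ->
            inR (k - l) (T l) /\ (forall x xi, ialpha (T l) x xi = 0)) ->
         (forall x xi, \sum_(l < k.+1) scomp delta (k - l) l (T l) x xi = 0) ->
         forall l, (l <= k)%N ->
           forall x xi, scomp delta (k - l) l (T l) x xi = 0)].
Proof.
move=> hn hk H.
have hr := @r_nz R n delta k H.
split.
- move=> l T hl hT _; have := @inR_scomp R n delta (k - l)%N l T hT.
  by rewrite subnK.
- move=> S hS; exact: (@span_dec R n delta k hr S hS).
- move=> T hT hs l hl x xi; exact: (@direct_dec R n delta k hr T hT hs l hl x xi).
Qed.
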